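(* For every positive integer $n$, there is a simple coalition game $\mathcal G$ over the $n\times n$ grid graph $R_n$ with $\dfrac{\rho^f(\mathcal G)}{\rho(\mathcal G)}\ge \tfrac12\tau(R_n)$.
   Context: $R_n$ is the grid graph on $\{1,\dots,n\}^2$ with $(i,j)\sim(i',j')$ iff $|i-i'|+|j-j'|=1$. Coalition game over $G=(V,E)$: a valuation $v:2^V\to\mathbb Z_{\ge0}$ with $v(\emptyset)=0$, $v(S)=0$ whenever $G[S]$ is disconnected, $v$ not identically zero; simple if values lie in $\{0,1\}$. $\rho^f(\mathcal G)=\max\{\sum_S v(S)y_S: y\ge0,\ \sum_{S\ni i}y_S\le1\ \forall i\}$, and $\rho(\mathcal G)$ the same maximum over $0/1$ vectors $y$. Thicket number $\tau(G)$: maximum, over collections $\mathcal H$ of nonempty, connected-inducing, pairwise intersecting vertex sets, of the minimum size of a set meeting every member of $\mathcal H$. *)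

(* Defs.v *)
From HB Require Import structures.
From mathcomp Require Import all_boot all_order all_algebra.
Set Implicit Arguments. Unset Strict Implicit. Unset Printing Implicit Defensive.
Import Order.TTheory GRing.Theory Num.Theory.

(* The grid graph R_n on {1..n}^2, with vertices encoded as 'I_n * 'I_n
   (coordinate k in {1..n} is represented by k-1). *)
Definition grid_V (n : nat) : finType := ('I_n * 'I_n)%type.

Definition grid_adj (n : nat) : rel (grid_V n) :=
  fun p q => (`|(p.1 : nat) - (q.1 : nat)| + `|(p.2 : nat) - (q.2 : nat)|)%N == 1%N.

(* G[S] is connected: any two vertices of S are joined by a path inside S.
   (The empty set is vacuously connected; this never matters below, since
   v(emptyset) = 0 is required separately and thicket members are nonempty.) *)
Definition induced_rel (T : finType) (e : rel T) (S : {set T}) : rel T :=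
  fun x y => [&& e x y, x \in S & y \in S].

Definition connected_set (T : finType) (e : rel T) (S : {set T}) : bool :=
  [forall x in S, forall y in S, connect (induced_rel e S) x y].

Definition coalition_game (T : finType) (e : rel T) (v : {set T} -> nat) : Prop :=
  [/\ v set0 = 0%N,
      (forall S : {set T}, ~~ connected_set e S -> v S = 0%N) &
      (exists S : {set T}, v S <> 0%N)].

Definition simple_game (T : finType) (e : rel T) (v : {set T} -> nat) : Prop :=
  coalition_game e v /\ (forall S : {set T}, (v S <= 1)%N).

(* rho(G): maximum of sum_S v(S) y_S over 0/1 vectors y (identified with the
   family F = {S | y_S = 1}) with sum_{S ni i} y_S <= 1 for every vertex i. *)
Definition int_packing (T : finType) (F : {set {set T}}) : bool :=
  [forall i : T, #|[set S in F | i \in S]| <= 1]%N.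

Definition rho (T : finType) (v : {set T} -> nat) : nat :=
  \max_(F : {set {set T}} | int_packing F) \sum_(S in F) v S.

Definition frac_packing (T : finType) (y : {ffun {set T} -> rat}) : Prop :=
  (forall S, 0 <= y S)%R /\ (forall i : T, \sum_(S : {set T} | i \in S) y S <= 1)%R.

Definition frac_value (T : finType) (v : {set T} -> nat) (y : {ffun {set T} -> rat}) : rat :=
  (\sum_(S : {set T}) (v S)%:R * y S)%R.

Definition is_rho_f (T : finType) (v : {set T} -> nat) (r : rat) : Prop :=
  (exists2 y, frac_packing y & frac_value v y = r) /\
  (forall y, frac_packing y -> (frac_value v y <= r)%R).

Definition thicket (T : finType) (e : rel T) (H : {set {set T}}) : bool :=
  [forall S in H, (S != set0) && connected_set e S] &&
  [forall S in H, forall S' in H, S :&: S' != set0].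

Definition hitting_number (T : finType) (H : {set {set T}}) : nat :=
  \big[minn/#|T|]_(X : {set T} | [forall S in H, X :&: S != set0]) #|X|.

Definition thicket_number (T : finType) (e : rel T) : nat :=
  \max_(H : {set {set T}} | thicket e H) hitting_number H.

(* Main.v *)
Require Import Defs.
From HB Require Import structures.
From mathcomp Require Import all_boot all_order all_algebra.
From mathcomp Require Import zify ring lra.
Import Order.TTheory GRing.Theory Num.Theory.
Set Implicit Arguments. Unset Strict Implicit. Unset Printing Implicit Defensive.

Lemma connect_pres (T : finType) (e : rel T) (P : pred T) x y :
  (forall a b, e a b -> P a -> P b) -> connect e x y -> P x -> P y.
Proof.
move=> HP /connectP [p pth ->]; elim: p x pth => [|z p IH] x //= /andP [exz pz] Px.
exact: IH pz (HP _ _ exz Px).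
Qed.

Lemma row_below n (S : {set grid_V n}) (r : nat) x y :
  connected_set (@grid_adj n) S -> x \in S -> y \in S ->
  (forall z, z \in S -> (z.1 : nat) != r) -> (x.1 < r)%N -> (y.1 < r)%N.
Proof.
move=> /forallP /(_ x) /implyP Hc xS yS Hr xr.
move: (Hc xS) => /forallP /(_ y) /implyP /(_ yS) Hxy.
suff : (y \in S) && (y.1 < r)%N by case/andP.
apply: (@connect_pres _ _ (fun z => (z \in S) && (z.1 < r)%N) _ _ _ Hxy); last by rewrite xS.
move=> a b /and3P [ab aS bS] /andP [_ ar]; rewrite bS /=.
move: (Hr b bS) ab; rewrite /grid_adj => /eqP br /eqP ab; move: ab br ar; move: (a.1 : nat) (b.1 : nat) (a.2 : nat) (b.2 : nat) => ? ? ? ?; lia.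
Qed.

Lemma row_above n (S : {set grid_V n}) (r : nat) x y :
  connected_set (@grid_adj n) S -> x \in S -> y \in S ->
  (forall z, z \in S -> (z.1 : nat) != r) -> (r < x.1)%N -> (r < y.1)%N.
Proof.
move=> /forallP /(_ x) /implyP Hc xS yS Hr xr.
move: (Hc xS) => /forallP /(_ y) /implyP /(_ yS) Hxy.
suff : (y \in S) && (r < y.1)%N by case/andP.
apply: (@connect_pres _ _ (fun z => (z \in S) && (r < z.1)%N) _ _ _ Hxy); last by rewrite xS.
move=> a b /and3P [ab aS bS] /andP [_ ar]; rewrite bS /=.
move: (Hr b bS) ab; rewrite /grid_adj => /eqP br /eqP ab; move: ab br ar; move: (a.1 : nat) (b.1 : nat) (a.2 : nat) (b.2 : nat) => ? ? ? ?; lia.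
Qed.

Definition rowset n (r : 'I_n) : {set grid_V n} := [set x | x.1 == r].
Arguments rowset {n}.

Lemma card_rowset n r : (#|@rowset n r| <= n)%N.
Proof.
have -> : rowset r = [set (r, b) | b : 'I_n].
  apply/setP => -[a b]; rewrite !inE; apply/eqP/imsetP => [/= ->|[c _ [-> _]]] //.
  by exists b.
by rewrite (leq_trans (leq_imset_card _ _)) // card_ord.
Qed.

Lemma hitting_le (T : finType) (H : {set {set T}}) X :
  [forall S in H, X :&: S != set0] -> (hitting_number H <= #|X|)%N.
Proof.
move=> hX; rewrite /hitting_number.
have : X \in index_enum {set T} by rewrite mem_index_enum.
elim: (index_enum _) => [//|Y s IH]; rewrite inE big_cons => /orP [/eqP <-|Xs].
  by rewrite hX geq_minl.
case: ifP => _; [exact: leq_trans (geq_minr _ _) (IH Xs) | exact: IH].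
Qed.

Lemma thicket_grid_le n : (0 < n)%N -> (thicket_number (@grid_adj n) <= n)%N.
Proof.
move=> hn.
apply/bigmax_leqP => H /andP [/forallP Hne /forallP Hint].
have [/existsP [r hr]|nr] := boolP [exists r : 'I_n, [forall S in H, rowset r :&: S != set0]].
  exact: leq_trans (hitting_le hr) (card_rowset r).
exfalso.
have miss r : (r < n)%N -> exists2 S, S \in H & forall z, z \in S -> (z.1 : nat) != r.
  move=> rn.
  have : ~~ [forall S in H, rowset (Ordinal rn) :&: S != set0].
    apply/negP => h; move/negP: nr; apply; apply/existsP; by exists (Ordinal rn).
  rewrite negb_forall => /existsP [S]; rewrite negb_imply negbK => /andP [SH /eqP hS].
  exists S => // z zS; apply/eqP => zr.
  have : z \in rowset (Ordinal rn) :&: S.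
    by rewrite !inE zS andbT; apply/eqP/val_inj.
  by rewrite hS inE.
have side r S : S \in H -> (forall z, z \in S -> (z.1 : nat) != r) ->
    (forall z, z \in S -> (z.1 < r)%N) \/ (forall z, z \in S -> (r < z.1)%N).
  move=> SH Sr; move: (Hne S); rewrite SH /= => /andP [/set0Pn [x xS] Sc].
  have := Sr x xS; rewrite neq_ltn => /orP [xr|xr].
    by left => z zS; exact: row_below Sc xS zS Sr xr.
  by right => z zS; exact: row_above Sc xS zS Sr xr.
have nonempty S : S \in H -> exists x, x \in S.
  by move=> SH; move: (Hne S); rewrite SH /= => /andP [/set0Pn [x xS] _]; exists x.
have b_all k : (k < n)%N -> exists2 S, S \in H & forall z, z \in S -> (k < z.1)%N.
  elim: k => [|k IH] kn.
    have [S SH Sr] := miss 0%N kn.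
    case: (side _ _ SH Sr) => [Hl|Hr]; last by exists S.
    by have [x xS] := nonempty S SH; have := Hl x xS.
  have [S2 S2H S2r] := miss _ kn.
  case: (side _ _ S2H S2r) => [Hl|Hr]; last by exists S2.
  have [S1 S1H S1r] := IH (ltnW kn).
  move: (Hint S1); rewrite S1H /= => /forallP /(_ S2); rewrite S2H /= => /set0Pn [x].
  rewrite inE => /andP [x1 x2]; have := S1r x x1; have := Hl x x2; lia.
have [S SH Sr] := b_all n.-1 ltac:(by rewrite prednK).
have [x xS] := nonempty S SH; have := Sr x xS; have := ltn_ord x.1; lia.
Qed.
Lemma rho_one (T : finType) (W : {set {set T}}) S0 :
  S0 \in W ->
  (forall S1 S2, S1 \in W -> S2 \in W -> S1 :&: S2 != set0) ->
  rho (fun S => nat_of_bool (S \in W)) = 1%N.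
Proof.
move=> S0W Hint; apply/eqP; rewrite eqn_leq; apply/andP; split.
  apply/bigmax_leqP => F /forallP Fp.
  rewrite (eq_bigr (fun S => if S \in W then 1%N else 0%N)); last by move=> S _; case: (S \in W).
  rewrite -big_mkcondr /= sum1_card leqNgt; apply/negP => /card_gt1P [S1 [S2 [h1 h2 neq]]].
  move: h1 h2 => /andP [F1 W1] /andP [F2 W2].
  have /set0Pn [i] := Hint _ _ W1 W2; rewrite inE => /andP [i1 i2].
  have := Fp i; rewrite leqNgt => /negP; apply; apply/card_gt1P.
  by exists S1, S2; rewrite !inE F1 F2 i1 i2.
have hp : int_packing [set S0].
  apply/forallP => i; rewrite -(cards1 S0); apply: subset_leq_card.
  by apply/subsetP => S; rewrite inE => /andP [].
by apply: leq_trans (leq_bigmax_cond _ hp); rewrite big_set1 S0W.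
Qed.

Local Open Scope ring_scope.

Lemma rho_f_dual (T : finType) (v : {set T} -> nat) (y : {ffun {set T} -> rat}) (z : T -> rat) :
  frac_packing y -> (forall x, 0 <= z x) ->
  (forall S, (v S)%:R <= \sum_(x in S) z x) ->
  frac_value v y = \sum_x z x ->
  is_rho_f v (\sum_x z x).
Proof.
move=> yp z0 vz fv; split; first by exists y.
move=> y' [y0 y1]; rewrite /frac_value.
apply: (le_trans (ler_sum _ (fun S _ => ler_wpM2r (y0 S) (vz S)))).
rewrite (eq_bigr (fun S : {set T} => \sum_x (if x \in S then z x * y' S else 0))); last first.
  by move=> S _; rewrite mulr_suml big_mkcond.
rewrite exchange_big /=.
rewrite (eq_bigr (fun x => z x * \sum_(S : {set T} | x \in S) y' S)); last first.
  by move=> x _; rewrite mulr_sumr [RHS]big_mkcond.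
rewrite [X in _ <= X](eq_bigr (fun x => z x * 1)); last by move=> x _; rewrite mulr1.
by apply: ler_sum => x _; apply: ler_wpM2l.
Qed.

Lemma sum_ind (T : finType) (P : pred T) (W : {set T}) (c : rat) :
  \sum_(S | P S) (if S \in W then c else 0) = #|[set S in W | P S]|%:R * c.
Proof.
rewrite -big_mkcondr /= -sum1_card natr_sum mulr_suml.
apply: eq_big => [S|S _]; first by rewrite !inE andbC.
by rewrite mul1r.
Qed.

Local Open Scope ring_scope.

Definition cross n (i : 'I_n) : {set grid_V n} := [set x | (x.1 == i) || (x.2 == i)].
Arguments cross {n}.
Definition Wset n : {set {set grid_V n}} := [set cross i | i : 'I_n].

Lemma grid_sym n S : symmetric (induced_rel (@grid_adj n) S).
Proof.
move=> x y; rewrite /induced_rel /grid_adj distnC [X in (_ + X)%N]distnC.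
by rewrite (andbC (x \in S)).
Qed.

Lemma line_connect (T : finType) (e : rel T) (f : nat -> T) N :
  (forall k, (k < N)%N -> e (f k) (f k.+1)) -> forall k, (k <= N)%N -> connect e (f 0%N) (f k).
Proof.
move=> He; elim=> [|k IH] kN; first exact: connect0.
exact: connect_trans (IH (ltnW kN)) (connect1 (He _ kN)).
Qed.

Lemma cross_connected n (i : 'I_n) : connected_set (@grid_adj n) (cross i).
Proof.
case: n i => [[] //|m] i.
set e := induced_rel (@grid_adj m.+1) (cross i).
have esym : symmetric e by exact: grid_sym.
have toc x : x \in cross i -> connect e x (i, i).
  rewrite inE => /orP [/eqP x1|/eqP x2].
    pose f k := (i, inord k : 'I_m.+1).
    have L := @line_connect _ e f m.
    have step : forall k, (k < m)%N -> e (f k) (f k.+1).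
      move=> k km; rewrite /e /induced_rel /grid_adj !inE /= eqxx /= !inordK //; last by lia.
      by apply/eqP; lia.
    have h1 := L step x.2 (ltn_ord x.2 : (x.2 <= m)%N).
    have h2 := L step i (ltn_ord i : (i <= m)%N).
    have fx : f x.2 = x by rewrite /f inord_val -x1; case: x {h1 x1}.
    have fi : f i = (i, i) by rewrite /f inord_val.
    rewrite -fx -fi; apply: connect_trans _ h2; by rewrite (sym_connect_sym esym).
  pose f k := (inord k : 'I_m.+1, i).
  have L := @line_connect _ e f m.
  have step : forall k, (k < m)%N -> e (f k) (f k.+1).
    move=> k km; rewrite /e /induced_rel /grid_adj !inE /= eqxx /= !orbT !inordK //; last by lia.
    by apply/eqP; lia.
  have h1 := L step x.1 (ltn_ord x.1 : (x.1 <= m)%N).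
  have h2 := L step i (ltn_ord i : (i <= m)%N).
  have fx : f x.1 = x by rewrite /f inord_val -x2; case: x {h1 x2}.
  have fi : f i = (i, i) by rewrite /f inord_val.
  rewrite -fx -fi; apply: connect_trans _ h2; by rewrite (sym_connect_sym esym).
apply/forallP => x; apply/implyP => xC; apply/forallP => y; apply/implyP => yC.
apply: connect_trans (toc x xC) _; rewrite (sym_connect_sym esym); exact: toc.
Qed.

Lemma cross_inter n (i j : 'I_n) : cross i :&: cross j != set0.
Proof. by apply/set0Pn; exists (i, j); rewrite !inE /= !eqxx /= orbT. Qed.

Lemma Wset_inter n S1 S2 : S1 \in Wset n -> S2 \in Wset n -> S1 :&: S2 != set0.
Proof. by move=> /imsetP [i _ ->] /imsetP [j _ ->]; exact: cross_inter. Qed.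

Lemma cross_inj n : injective (@cross n).
Proof.
move=> i j h; have : (i, i) \in cross j by rewrite -h !inE /= eqxx.
by rewrite !inE /= orbb => /eqP.
Qed.

Lemma card_W n : #|Wset n| = n.
Proof. by rewrite card_imset ?card_ord //; exact: cross_inj. Qed.

Lemma cross_mem n (i : 'I_n) : (i, i) \in cross i.
Proof. by rewrite !inE /= eqxx. Qed.

Lemma W_at_x n (x : grid_V n) : (#|[set S in Wset n | x \in S]| <= 2)%N.
Proof.
apply: (leq_trans (subset_leq_card (_ : _ \subset [set cross x.1; cross x.2]))).
  apply/subsetP => S; rewrite !inE => /andP [/imsetP [i _ ->]].
  by rewrite !inE => /orP [/eqP <-|/eqP <-]; rewrite eqxx ?orbT.
by rewrite cards2; case: (_ != _).
Qed.

Definition vW n (S : {set grid_V n}) : nat := S \in Wset n.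

Lemma simple_vW n : (0 < n)%N -> simple_game (@grid_adj n) (@vW n).
Proof.
move=> hn; split; last by move=> S; rewrite /vW; case: (S \in _).
split.
- rewrite /vW; case: (boolP (set0 \in Wset n)) => // /imsetP [i _ h].
  by have := cross_mem i; rewrite -h inE.
- move=> S nc; rewrite /vW; case: (boolP (S \in Wset n)) => // /imsetP [i _ h].
  by rewrite h cross_connected in nc.
- exists (cross (Ordinal hn)); by rewrite /vW imset_f.
Qed.

Lemma rho_f_W n (P : {set grid_V n}) (c d : rat) :
  0 <= c -> 0 <= d ->
  (forall x, #|[set S in Wset n | x \in S]|%:R * c <= 1) ->
  (forall i : 'I_n, 1 <= #|[set x in P | x \in cross i]|%:R * d) ->
  #|Wset n|%:R * c = #|P|%:R * d ->
  is_rho_f (@vW n) (#|P|%:R * d).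
Proof.
move=> c0 d0 Hy Hv Heq.
pose y : {ffun {set grid_V n} -> rat} := [ffun S => if S \in Wset n then c else 0].
pose z := fun x : grid_V n => if x \in P then d else 0.
have hz : #|P|%:R * d = \sum_x z x.
  rewrite /z sum_ind; congr (_%:R * _); apply: eq_card => x; by rewrite !inE andbT.
rewrite hz; apply: (@rho_f_dual _ _ y).
- split; first by move=> S; rewrite ffunE; case: ifP.
  move=> x; rewrite (eq_bigr (fun S => if S \in Wset n then c else 0)); last by move=> S _; rewrite ffunE.
  by rewrite sum_ind.
- by move=> x; rewrite /z; case: ifP.
- move=> S; rewrite /vW /z sum_ind; case: (boolP (S \in Wset n)) => [/imsetP [i _ ->]|_] /=.
    exact: Hv.
  by rewrite mulr_ge0.
- rewrite /frac_value (eq_bigr (fun S => if S \in Wset n then c else 0)); last first.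
    by move=> S _; rewrite /vW ffunE; case: (S \in Wset n); rewrite ?mul1r ?mul0r.
  rewrite sum_ind -hz -Heq; congr (_%:R * _).
  by apply: eq_card => S; rewrite !inE andbT.
Qed.

Theorem lemma5p2 (n : nat) (hn : (0 < n)%N) :
  exists v : {set grid_V n} -> nat,
    simple_game (@grid_adj n) v /\
    exists rf : rat,
      is_rho_f v rf /\
      ((thicket_number (@grid_adj n))%:R / 2 <= rf / (rho v)%:R)%R.
Proof.
exists (@vW n); split; first exact: simple_vW.
have hr : rho (@vW n) = 1%N.
  exact: (@rho_one _ (Wset n) (cross (Ordinal hn)) (imset_f _ _) (@Wset_inter n)).
have ht := thicket_grid_le hn.
rewrite hr.


have tR : (thicket_number (@grid_adj n))%:R <= n%:R :> rat by rewrite ler_nat.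
case: n hn ht tR {hr} => [//|[|m]] hn ht tR.
- have cT : #|[set: grid_V 1]| = 1%N by rewrite cardsT card_prod card_ord.
  exists (#|[set: grid_V 1]|%:R * 1); split.
    apply: (@rho_f_W 1 setT 1 1) => //.
    + move=> x; rewrite mulr1 (_ : 1 = 1%:R) // ler_nat.
      apply: leq_trans (subset_leq_card (_ : _ \subset Wset 1)) _.
        by apply/subsetP => S; rewrite inE => /andP [].
      by rewrite card_W.
    + move=> i; rewrite mulr1 (_ : 1 = 1%:R) // ler_nat card_gt0; apply/set0Pn.
      by exists (i, i); rewrite !inE /= eqxx.
    + by rewrite card_W cT.
  rewrite cT mulr1; lra.
- pose P : {set grid_V m.+2} := [set (i, i + 1) | i : 'I_m.+2].
  have cP : #|P| = m.+2.
    by rewrite card_imset ?card_ord // => i j [].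
  exists (#|P|%:R * 2^-1); split; last first.
    by rewrite cP; lra.
  apply: (@rho_f_W _ P (2^-1) (2^-1)) => //.
  + move=> x; have := W_at_x x; rewrite -(ler_nat rat) => h; lra.
  + move=> i.
    have : (1 < #|[set x in P | x \in cross i]|)%N.
      apply/card_gt1P; exists (i, i + 1), (i - 1, i); rewrite !inE /= !eqxx ?orbT /=.
      split.
      * by rewrite imset_f.
      * by rewrite andbT; apply/imsetP; exists (i - 1) => //; rewrite subrK.
      * apply/negP => /eqP [h].
        have e := congr1 (fun t => i - t) h; simpl in e.
        rewrite subrr opprB addrC subrK in e.
        by move/eqP: e; rewrite eq_sym oner_eq0.
    rewrite -(ler_nat rat) => h; lra.
  + by rewrite card_W cP.
Qed.
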